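(* Let $m>0$ and let $\chi\in C_c^\infty(\mathbb R)$ be even with $\chi(z)=1$ for $|z|<z_0$, $\chi(z)=0$ for $|z|>2z_0$, $z_0\ll1$. Suppose $\mathcal E$ is twice differentiable on $(0,2z_0)$ with $|\partial_z^j\mathcal E(z)|\lesssim|\partial_z^j(\log z)^{-2}|$ for $j=0,1,2$ and $0<z<2z_0$. Then for $t>2$, $$\Big|\int_0^\infty e^{-it\sqrt{z^2+m^2}}\frac{z\chi(z)}{\sqrt{z^2+m^2}}\mathcal E(z)\,dz\Big|\lesssim\frac1{t\log^2t}.$$ *)

(* Defs.v *)
From Stdlib Require Import Reals Lra.
Open Scope R_scope.

Definition smooth (f : R -> R) : Prop :=
  exists D : nat -> R -> R,
    (forall x, D O x = f x) /\
    (forall n x, derivable_pt_lim (D n) x (D (S n) x)).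

Definition amp (m : R) (chi E : R -> R) (z : R) : R :=
  z * chi z * E z / sqrt (z ^ 2 + m ^ 2).

(* Real and imaginary parts of e^{-it sqrt(z^2+m^2)} * amp z. *)
Definition re_integrand (m t : R) (chi E : R -> R) (z : R) : R :=
  cos (t * sqrt (z ^ 2 + m ^ 2)) * amp m chi E z.
Definition im_integrand (m t : R) (chi E : R -> R) (z : R) : R :=
  - sin (t * sqrt (z ^ 2 + m ^ 2)) * amp m chi E z.

(* Main.v *)
Require Import Defs.
From Coquelicot Require Import Coquelicot.
From Stdlib Require Import Reals Lra FunctionalExtensionality.
Open Scope R_scope.


Lemma exp3_le : exp 3 <= 27.
Proof.
  replace 3 with (1+1+1) by ring. rewrite !exp_plus.
  pose proof exp_le_3. pose proof (exp_pos 1).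
  replace 27 with (3*3*3) by ring.
  apply Rmult_le_compat; try nra.
Qed.

Lemma ln_le_m3 z : 0 < z -> z <= / 27 -> ln z <= -3.
Proof.
  intros hz h. apply Rle_trans with (ln (/27)). apply ln_le; auto.
  rewrite ln_Rinv by lra.
  assert (ln (exp 3) <= ln 27) by (apply ln_le; [apply exp_pos| apply exp3_le]).
  rewrite ln_exp in H. lra.
Qed.

Lemma Lz_lt z : 0 < z -> - ln z < / z.
Proof.
  intros hz. destruct (Req_dec (ln z) 0) as [e|ne].
  - rewrite e. pose proof (Rinv_0_lt_compat z hz). lra.
  - pose proof (exp_ineq1 (- ln z)). rewrite exp_Ropp, exp_ln in H by auto. 
    assert (- ln z <> 0) by lra. specialize (H H0). lra.
Qed.

Lemma mvt_cmp (G G' P P' : R -> R) a b : a < b ->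
  (forall c, a <= c <= b -> derivable_pt_lim G c (G' c)) ->
  (forall c, a <= c <= b -> derivable_pt_lim P c (P' c)) ->
  (forall c, a <= c <= b -> Rabs (G' c) <= P' c) ->
  Rabs (G b - G a) <= P b - P a.
Proof.
  intros hab hG hP hb.
  destruct (MVT_cor2 (fun x => G x - P x) (fun x => G' x - P' x) a b hab) as [c0 [e1 e2]].
  { intros c hc. apply derivable_pt_lim_minus; auto. }
  destruct (MVT_cor2 (fun x => G x + P x) (fun x => G' x + P' x) a b hab) as [d [f1 f2]].
  { intros c hc. apply derivable_pt_lim_plus; auto. }
  assert (hc := hb c0 ltac:(lra)). assert (hd := hb d ltac:(lra)).
  apply Rabs_le. apply Rabs_le_between in hc. apply Rabs_le_between in hd.
  split; nra.
Qed.

Lemma Psi_deriv (f : R -> R) lo hi d x : (forall y, lo<y<hi -> continuous f y) -> lo<d<hi -> lo<x<hi ->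
  is_derive (fun y => RInt f d y) x (f x).
Proof.
  intros hc hd hx. apply is_derive_RInt with (a:=d).
  - apply locally_interval with lo hi; simpl; try lra.
    intros y h1 h2. apply RInt_correct. apply ex_RInt_continuous. intros z hz. apply hc.
    unfold Rmin, Rmax in hz. destruct (Rle_dec d y); lra.
  - apply hc; auto.
Qed.

Lemma ff_cont a m t (chi E : R -> R) x : 0 < m -> ex_derive chi x -> ex_derive E x ->
  continuous (fun z => cos (t * sqrt (z^2+m^2) + a) * amp m chi E z) x.
Proof.
  intros hm h1 h2. apply (ex_derive_continuous (K:=R_AbsRing) (V:=R_NormedModule)). unfold amp. auto_derive.
  assert (0 < x * (x*1) + m*(m*1)) by nra.
  repeat split; auto. apply Rgt_not_eq, sqrt_lt_R0; auto.
Qed.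

Lemma Ebounds K z (E E1 E2 : R -> R) : 0 <= K -> 0 < z -> ln z <= -3 ->
  Rabs (E z) <= K * Rabs (/ (ln z) ^ 2) ->
  Rabs (E1 z) <= K * Rabs (- 2 / ((ln z) ^ 3 * z)) ->
  Rabs (E2 z) <= K * Rabs (6 / ((ln z) ^ 4 * z ^ 2) + 2 / ((ln z) ^ 3 * z ^ 2)) ->
  Rabs (E z) <= K * (/ (- ln z))^2 /\ Rabs (E1 z) <= 2 * K * (/ (- ln z))^3 * / z /\
  Rabs (E2 z) <= 4 * K * (/ (- ln z))^3 * (/ z)^2.
Proof.
  intros hK hz hl b0 b1 b2.
  set (l := ln z) in *. set (v := / - l). set (u := / z).
  assert (hv : 0 < v) by (unfold v; apply Rinv_0_lt_compat; lra).
  assert (hv3 : v <= /3). { unfold v. apply Rinv_le_contravar; lra. }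
  assert (hu : 0 < u) by (unfold u; apply Rinv_0_lt_compat; lra).
  assert (hl0 : l <> 0) by lra. assert (hz0 : z <> 0) by lra.
  assert (e0 : / l ^ 2 = v^2) by (unfold v; field; auto).
  assert (e1 : -2 / (l^3 * z) = 2 * v^3 * u) by (unfold v, u; field; auto).
  assert (e2 : 6 / (l ^ 4 * z ^ 2) + 2 / (l ^ 3 * z ^ 2) = 6 * v^4 * u^2 - 2 * v^3*u^2)
    by (unfold v, u; field; auto).
  rewrite e0, e1, e2 in *.
  rewrite (Rabs_right (v^2)) in b0 by (apply Rle_ge; nra).
  rewrite (Rabs_right (2*v^3*u)) in b1 by (apply Rle_ge; apply Rmult_le_pos; [nra|lra]).
  split; [lra|split; [lra|]].
  apply Rle_trans with (1 := b2).
  assert (Rabs (6 * v ^ 4 * u ^ 2 - 2 * v ^ 3 * u ^ 2) <= 4 * v^3 * u^2).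
  { assert (0 <= v^3*u^2) by (apply Rmult_le_pos; apply pow_le; lra).
    apply Rabs_le. replace (6 * v ^ 4 * u ^ 2 - 2 * v ^ 3 * u ^ 2) with (6 * v * (v^3*u^2) - 2 * (v^3*u^2)) by ring.
    replace (4 * v ^ 3 * u ^ 2) with (4 * (v^3*u^2)) by ring.
    set (w := v^3*u^2) in *. assert (0 <= v * w) by (apply Rmult_le_pos; lra).
    assert (v * w <= /3 * w) by (apply Rmult_le_compat_r; lra).
    split; lra. }
  apply Rle_trans with (K*(4*v^3*u^2)); [apply Rmult_le_compat_l; auto | right; ring].
Qed.

Definition Hd (m : R) (chi D1 D2 E E1 E2 : R -> R) z := (D2 z * E z + 2 * D1 z * E1 z + chi z * E2 z) * sqrt(z^2+m^2) / z + (D1 z * E z + chi z * E1 z) * ((z * z / sqrt(z^2+m^2) - sqrt(z^2+m^2)) / z^2).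

Lemma absmul x y a b : Rabs x <= a -> Rabs y <= b -> Rabs (x*y) <= a * b.
Proof. intros. rewrite Rabs_mult. apply Rmult_le_compat; auto; apply Rabs_pos. Qed.

Lemma Hd_bound m (chi D1 D2 E E1 E2 : R -> R) K M0 M1 M2 z :
  0 < m -> 0 < z < 1 -> ln z <= -3 -> 0 <= K ->
  Rabs (chi z) <= M0 -> Rabs (D1 z) <= M1 -> Rabs (D2 z) <= M2 ->
  Rabs (E z) <= K * (/ (- ln z))^2 -> Rabs (E1 z) <= 2 * K * (/ (- ln z))^3 * / z ->
  Rabs (E2 z) <= 4 * K * (/ (- ln z))^3 * (/ z)^2 ->
  Rabs (Hd m chi D1 D2 E E1 E2 z) <=
   (K * sqrt (1 + m^2) * (M2 + 4*M1 + 4*M0) + K * m * (M1 + 2*M0)) * ((/ (- ln z))^3 * (/ z)^3).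
Proof.
  intros hm hz hl hK c0 c1 c2 b0 b1 b2.
  pose proof (Lz_lt z ltac:(lra)) as hLz.
  set (v := / - ln z) in *. set (u := / z) in *.
  set (ph := sqrt (z^2+m^2)). set (Ph := sqrt (1+m^2)).
  assert (hv : 0 < v) by (unfold v; apply Rinv_0_lt_compat; lra).
  assert (hu1 : 1 <= u). { unfold u. rewrite <- Rinv_1. apply Rinv_le_contravar; lra. }
  assert (hvu : 1 <= v * u). { unfold v. apply Rmult_le_reg_l with (- ln z). lra.
     field_simplify; lra. }
  assert (hph : m <= ph). { unfold ph. apply Rle_trans with (sqrt (m*m)); [rewrite sqrt_square; lra | apply sqrt_le_1_alt; nra]. }
  assert (hPh : ph <= Ph). { unfold ph, Ph. apply sqrt_le_1_alt. nra. }
  assert (hM0 : 0 <= M0) by (pose proof (Rabs_pos (chi z)); lra).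
  assert (hM1 : 0 <= M1) by (pose proof (Rabs_pos (D1 z)); lra).
  assert (hM2 : 0 <= M2) by (pose proof (Rabs_pos (D2 z)); lra).
  assert (hphsq : ph * ph = z^2 + m^2) by (unfold ph; apply sqrt_sqrt; apply Rplus_le_le_0_compat; apply pow2_ge_0).
  assert (eH : Hd m chi D1 D2 E E1 E2 z = (D2 z * E z + 2 * (D1 z * E1 z) + chi z * E2 z) * (ph * u)
     + (D1 z * E z + chi z * E1 z) * (- (m * m / ph) * (u * u))).
  { unfold Hd. fold ph. unfold u. replace (m*m) with (ph*ph - z^2) by (rewrite hphsq; ring).
    field. split; lra. }
  rewrite eH.
  assert (t1 := absmul _ _ _ _ c2 b0). assert (t2 := absmul _ _ _ _ c1 b1).
  assert (t3 := absmul _ _ _ _ c0 b2). assert (t4 := absmul _ _ _ _ c1 b0).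
  assert (t5 := absmul _ _ _ _ c0 b1).
  assert (w1 : Rabs (ph * u) <= Ph * u) by (rewrite Rabs_right by nra; nra).
  assert (w2 : Rabs (- (m * m / ph) * (u * u)) <= m * (u * u)).
  { rewrite Rabs_mult, Rabs_Ropp, Rabs_right, Rabs_right by (apply Rle_ge; try apply Rmult_le_pos; try apply Rmult_le_pos; try apply Rlt_le, Rinv_0_lt_compat; nra).
    apply Rmult_le_compat_r. nra. apply Rmult_le_reg_l with ph. lra. field_simplify; nra. }
  set (S1 := D2 z * E z + 2 * (D1 z * E1 z) + chi z * E2 z).
  set (S2 := D1 z * E z + chi z * E1 z).
  assert (s1 : Rabs S1 <= M2 * (K * v ^ 2) + 2 * (M1 * (2 * K * v ^ 3 * u)) + M0 * (4 * K * v ^ 3 * u ^ 2)).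
  { unfold S1. eapply Rle_trans. apply Rabs_triang. eapply Rle_trans. apply Rplus_le_compat_r. apply Rabs_triang.
    rewrite (Rabs_mult 2), (Rabs_right 2) by lra. lra. }
  assert (s2 : Rabs S2 <= M1 * (K * v ^ 2) + M0 * (2 * K * v ^ 3 * u)).
  { unfold S2. eapply Rle_trans. apply Rabs_triang. lra. }
  eapply Rle_trans. apply Rabs_triang.
  eapply Rle_trans. apply Rplus_le_compat; apply absmul; eassumption.
  assert (k1 : v^2 * u <= v^3*u^3).
  { replace (v^3*u^3) with ((v^2*u) * ((v*u)*u)) by ring. 
    assert (0 <= v^2*u) by (apply Rmult_le_pos; nra). assert (1 <= (v*u)*u) by nra. nra. }
  assert (k2 : v^3 * u^2 <= v^3*u^3).
  { replace (v^3*u^3) with ((v^3*u^2) * u) by ring. assert (0 <= v^3*u^2) by (apply Rmult_le_pos; apply pow_le; lra). nra. }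
  assert (k3 : v^2 * u^2 <= v^3*u^3).
  { replace (v^3*u^3) with ((v^2*u^2) * (v*u)) by ring. assert (0 <= v^2*u^2) by (apply Rmult_le_pos; apply pow_le; lra). nra. }
  assert (hPh0 : 0 <= Ph) by lra.
  set (p := v^3*u^3) in *.
  replace ((M2 * (K * v ^ 2) + 2 * (M1 * (2 * K * v ^ 3 * u)) + M0 * (4 * K * v ^ 3 * u ^ 2)) * (Ph * u) +
     (M1 * (K * v ^ 2) + M0 * (2 * K * v ^ 3 * u)) * (m * (u * u)))
  with ((K*Ph*M2) * (v^2*u) + (4*K*Ph*M1) * (v^3*u^2) + (4*K*Ph*M0) * p + (K*m*M1) * (v^2*u^2) + (2*K*m*M0)*p)
    by (unfold p; ring).
  assert (0 <= K*Ph*M2) by (repeat apply Rmult_le_pos; lra).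
  assert (0 <= 4*K*Ph*M1) by (repeat apply Rmult_le_pos; lra).
  assert (0 <= K*m*M1) by (repeat apply Rmult_le_pos; lra).
  assert (a1 := Rmult_le_compat_l _ _ _ H k1). assert (a2 := Rmult_le_compat_l _ _ _ H0 k2).
  assert (a3 := Rmult_le_compat_l _ _ _ H1 k3).
  lra.
Qed.

Definition Q z := - / (z^2 * (- ln z)^3).

Lemma Q_deriv z : 0 < z -> ln z <= -3 ->
  derivable_pt_lim Q z ((2 - 3 / (- ln z)) / (z^3 * (- ln z)^3)).
Proof.
  intros hz hl. apply is_derive_Reals. unfold Q. auto_derive.
  - repeat split; auto. assert (0 < - ln z) by lra.
    apply Rgt_not_eq. repeat apply Rmult_lt_0_compat; lra.
  - field. lra.
Qed.

Lemma Q_deriv_ge z : 0 < z -> ln z <= -3 ->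
  (/ (- ln z))^3 * (/ z)^3 <= (2 - 3 / (- ln z)) / (z^3 * (- ln z)^3).
Proof.
  intros hz hl. assert (0 < - ln z) by lra. assert (3 <= - ln z) by lra. set (L := - ln z) in *.
  replace ((2 - 3 / L) / (z^3 * L^3)) with ((2 - 3/L) * ((/ L)^3 * (/ z)^3)) by (field; lra).
  assert (0 < (/ L)^3 * (/ z)^3) by (apply Rmult_lt_0_compat; apply pow_lt; apply Rinv_0_lt_compat; lra).
  assert (/ L <= / 3) by (apply Rinv_le_contravar; lra).
  set (w := (/ L)^3 * (/ z)^3) in *. unfold Rdiv. nra.
Qed.

Lemma Q_nonpos z : 0 < z -> ln z <= -3 -> Q z <= 0.
Proof.
  intros hz hl. unfold Q. assert (0 < z^2 * (- ln z)^3) by (apply Rmult_lt_0_compat; apply pow_lt; lra).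
  pose proof (Rinv_0_lt_compat _ H). lra.
Qed.

Lemma Q_val z : 0 < z -> ln z <= -3 -> - Q z = (/ (- ln z))^3 * (/ z)^2.
Proof. intros hz hl. unfold Q. field. lra. Qed.

Definition HH (m : R) (chi D1 E E1 : R -> R) z := (D1 z * E z + chi z * E1 z) * sqrt(z^2+m^2) / z.
Definition Bd a m t (chi D1 E E1 : R -> R) z := / t * sin (t * sqrt(z^2+m^2) + a) * (chi z * E z) + / t^2 * cos (t * sqrt(z^2+m^2)+a) * HH m chi D1 E E1 z.
Definition ff a m t (chi E : R -> R) z := cos (t * sqrt (z^2+m^2) + a) * amp m chi E z.

Lemma Bd_deriv a m t chi D1 D2 E E1 E2 x :
  is_derive chi x (D1 x) -> is_derive D1 x (D2 x) -> is_derive E x (E1 x) -> is_derive E1 x (E2 x) ->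
  0 < m -> x <> 0 -> t <> 0 ->
  is_derive (Bd a m t chi D1 E E1) x (ff a m t chi E x + / t^2 * cos (t * sqrt(x^2+m^2) + a) * Hd m chi D1 D2 E E1 E2 x).
Proof.
intros h1 h2 h3 h4 hm hx ht.
assert (hp : 0 < x^2 + m^2) by nra.
assert (hs : 0 < sqrt (x^2+m^2)) by (apply sqrt_lt_R0; lra).
unfold Bd, HH, ff, amp, Hd. auto_derive.
- repeat split; try (eexists; eassumption); try nra; try lra.
- replace (Derive (fun x0 => chi x0) x) with (D1 x) by (symmetry; apply is_derive_unique; auto).
  replace (Derive (fun x0 => E x0) x) with (E1 x) by (symmetry; apply is_derive_unique; auto).
  replace (Derive (fun x0 => D1 x0) x) with (D2 x) by (symmetry; apply is_derive_unique; auto).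
  replace (Derive (fun x0 => E1 x0) x) with (E2 x) by (symmetry; apply is_derive_unique; auto).
  replace (x * (x*1) + m*(m*1)) with (x^2+m^2) by ring.
  field. lra.
Qed.

Lemma phi_bounds m z : 0 < m -> 0 <= z <= 1 -> m <= sqrt (z^2+m^2) <= sqrt (1+m^2).
Proof.
  intros hm hz. split.
  - apply Rle_trans with (sqrt (m*m)); [rewrite sqrt_square; lra | apply sqrt_le_1_alt; nra].
  - apply sqrt_le_1_alt. nra.
Qed.

Lemma amp_bound m (chi E : R -> R) z M0 K : 0 < m -> 0 < z <= 1 -> Rabs (chi z) <= M0 ->
  Rabs (E z) <= K * (/ (- ln z))^2 -> Rabs (amp m chi E z) <= z * M0 * (K * (/ (- ln z))^2) / m.
Proof.
  intros hm hz h0 h1. destruct (phi_bounds m z hm ltac:(lra)) as [p1 p2].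
  unfold amp. unfold Rdiv. rewrite !Rabs_mult. rewrite (Rabs_right z) by lra.
  rewrite Rabs_Rinv by lra. rewrite (Rabs_right (sqrt _)) by lra.
  apply Rmult_le_compat; try apply Rlt_le, Rinv_0_lt_compat; try lra.
  - repeat apply Rmult_le_pos; try apply Rabs_pos; lra.
  - apply Rmult_le_compat; try apply Rmult_le_pos; try apply Rabs_pos; try lra.
    apply Rmult_le_compat_l; lra.
  - apply Rinv_le_contravar; lra.
Qed.

Lemma HH_bound m (chi D1 E E1 : R -> R) z K : 0 < m -> 0 < z <= 1 ->
  Rabs (E z) <= K * (/ (- ln z))^2 -> Rabs (E1 z) <= 2 * K * (/ (- ln z))^3 * / z ->
  Rabs (HH m chi D1 E E1 z) <=
   (Rabs (D1 z) * (K * (/ (- ln z))^2) + Rabs (chi z) * (2 * K * (/ (- ln z))^3 * / z)) * sqrt (1+m^2) * / z.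
Proof.
  intros hm hz h0 h1. destruct (phi_bounds m z hm ltac:(lra)) as [p1 p2].
  unfold HH. unfold Rdiv. rewrite !Rabs_mult. rewrite (Rabs_Rinv z) by lra.
  rewrite (Rabs_right z) by lra. rewrite (Rabs_right (sqrt _)) by lra.
  assert (0 < / z) by (apply Rinv_0_lt_compat; lra).
  apply Rmult_le_compat_r; try lra.
  apply Rmult_le_compat; try lra. apply Rabs_pos.
  eapply Rle_trans. apply Rabs_triang. rewrite !Rabs_mult.
  apply Rplus_le_compat; apply Rmult_le_compat_l; auto; apply Rabs_pos.
Qed.

Lemma Bd_abs a m t chi D1 E E1 z : 0 < t ->
  Rabs (Bd a m t chi D1 E E1 z) <= / t * (Rabs (chi z) * Rabs (E z)) + / t^2 * Rabs (HH m chi D1 E E1 z).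
Proof.
  intros ht. unfold Bd. eapply Rle_trans. apply Rabs_triang.
  assert (0 < / t) by (apply Rinv_0_lt_compat; lra).
  assert (0 < / t^2) by (apply Rinv_0_lt_compat; apply pow_lt; lra).
  rewrite !Rabs_mult. rewrite !Rabs_right by lra.
  pose proof (SIN_bound (t * sqrt (z ^ 2 + m ^ 2) + a)). pose proof (COS_bound (t * sqrt (z ^ 2 + m ^ 2) + a)).
  assert (Rabs (sin (t * sqrt (z ^ 2 + m ^ 2) + a)) <= 1) by (apply Rabs_le; lra).
  assert (Rabs (cos (t * sqrt (z ^ 2 + m ^ 2) + a)) <= 1) by (apply Rabs_le; lra).
  pose proof (Rabs_pos (chi z)). pose proof (Rabs_pos (E z)). pose proof (Rabs_pos (HH m chi D1 E E1 z)).
  pose proof (Rabs_pos (sin (t * sqrt (z ^ 2 + m ^ 2) + a))). pose proof (Rabs_pos (cos (t * sqrt (z ^ 2 + m ^ 2) + a))).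
  set (s1 := Rabs (sin _)) in *. set (c1 := Rabs (cos _)) in *.
  set (x1 := Rabs (chi z)) in *. set (x2 := Rabs (E z)) in *. set (x3 := Rabs (HH _ _ _ _ _ _)) in *.
  assert (0 <= x1 * x2) by (apply Rmult_le_pos; auto).
  assert (s1 * (x1*x2) <= x1*x2) by nra. assert (c1 * x3 <= x3) by nra.
  assert (/ t * (s1 * (x1 * x2)) <= / t * (x1 * x2)) by (apply Rmult_le_compat_l; lra).
  assert (/ t^2 * (c1 * x3) <= / t^2 * x3) by (apply Rmult_le_compat_l; lra).
  rewrite !Rmult_assoc. rewrite (Rabs_right (/ t^2)) by lra. lra.
Qed.

Lemma cont_small (f : R -> R) a : continuity_pt f a -> f a = 0 ->
  forall eps, 0 < eps -> exists d, 0 < d /\ forall x, Rabs (x - a) < d -> Rabs (f x) < eps.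
Proof.
  intros hc h0 eps he. destruct (hc eps he) as [al [hal H]]. exists al. split; auto.
  intros x hx. destruct (Req_dec x a) as [e|ne]. { subst. rewrite h0, Rabs_R0. auto. }
  specialize (H x). simpl in H. unfold Rdist in H. rewrite h0, Rminus_0_r in H. apply H.
  split; auto. unfold D_x, no_cond. split; auto.
Qed.

Lemma ff_le_amp a m t chi E z : Rabs (ff a m t chi E z) <= Rabs (amp m chi E z).
Proof.
  unfold ff. rewrite Rabs_mult. pose proof (COS_bound (t * sqrt (z ^ 2 + m ^ 2) + a)).
  assert (Rabs (cos (t * sqrt (z ^ 2 + m ^ 2) + a)) <= 1) by (apply Rabs_le; lra).
  pose proof (Rabs_pos (amp m chi E z)). pose proof (Rabs_pos (cos (t * sqrt (z ^ 2 + m ^ 2) + a))). nra.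
Qed.

Lemma amp0 m chi E : amp m chi E 0 = 0.
Proof. unfold amp, Rdiv. ring. Qed.

Lemma v_mono z d : 0 < z -> z <= d -> ln d <= -3 -> (/ (- ln z))^2 <= (/ (- ln d))^2.
Proof.
  intros hz hzd hd. assert (ln z <= ln d) by (apply ln_le; auto).
  assert (/ (- ln z) <= / (- ln d)) by (apply Rinv_le_contravar; lra).
  assert (0 < / (- ln z)) by (apply Rinv_0_lt_compat; lra). nra.
Qed.

Lemma v_le1 z : ln z <= -3 -> 0 < / (- ln z) <= /3.
Proof. intros. split. apply Rinv_0_lt_compat; lra. apply Rinv_le_contravar; lra. Qed.

Lemma near_piece a m t z0 K M0 (chi E : R -> R) d :
  0 < m -> 0 < z0 -> 2 * z0 <= / 27 -> 0 <= K -> 0 < d < 2 * z0 ->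
  (forall z, 0 < z < 2 * z0 -> Rabs (E z) <= K * (/ (- ln z))^2) ->
  (forall z, 0 <= z <= 2 * z0 -> Rabs (chi z) <= M0) ->
  ex_RInt (ff a m t chi E) 0 d ->
  Rabs (RInt (ff a m t chi E) 0 d) <= (d - 0) * (d * M0 * (K * (/ (- ln d))^2) / m).
Proof.
  intros hm hz0 hz1 hK hd hE hM hI.
  assert (hM0 : 0 <= M0) by (pose proof (hM 0 ltac:(lra)); pose proof (Rabs_pos (chi 0)); lra).
  assert (hld : ln d <= -3) by (apply ln_le_m3; lra).
  apply abs_RInt_le_const; [lra|auto|]. intros z hz.
  destruct (Req_dec z 0) as [e|ne].
  { subst. unfold ff. rewrite amp0, Rmult_0_r, Rabs_R0.
    apply Rmult_le_pos; [|apply Rlt_le, Rinv_0_lt_compat; lra].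
    assert (0 <= (/ - ln d)^2) by (apply pow_le; apply Rlt_le, (proj1 (v_le1 _ hld))).
    apply Rmult_le_pos; [apply Rmult_le_pos; lra | apply Rmult_le_pos; lra]. }
  eapply Rle_trans. apply ff_le_amp.
  assert (hl : ln z <= -3) by (apply ln_le_m3; lra).
  eapply Rle_trans. apply amp_bound; try lra. apply hM; lra. apply hE; lra.
  unfold Rdiv. apply Rmult_le_compat_r. apply Rlt_le, Rinv_0_lt_compat; lra.
  apply Rmult_le_compat; try lra.
  - apply Rmult_le_pos; lra.
  - apply Rmult_le_pos; auto. apply pow_le. apply Rlt_le, (proj1 (v_le1 _ hl)).
  - apply Rmult_le_compat_r; lra.
  - apply Rmult_le_compat_l; auto. apply v_mono; lra.
Qed.

Lemma tail_piece a m t z0 K M0 (chi E : R -> R) b :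
  0 < m -> 0 < z0 -> 2 * z0 <= / 27 -> 0 <= K -> 0 < b <= 2 * z0 ->
  (forall z, 0 < z < 2 * z0 -> Rabs (E z) <= K * (/ (- ln z))^2) ->
  (forall z, 0 <= z <= 2 * z0 -> Rabs (chi z) <= M0) -> chi (2 * z0) = 0 ->
  ex_RInt (ff a m t chi E) b (2 * z0) ->
  Rabs (RInt (ff a m t chi E) b (2 * z0)) <= (2 * z0 - b) * (M0 * K / m).
Proof.
  intros hm hz0 hz1 hK hb hE hM h2 hI.
  assert (hM0 : 0 <= M0) by (pose proof (hM 0 ltac:(lra)); pose proof (Rabs_pos (chi 0)); lra).
  apply abs_RInt_le_const; [lra|auto|]. intros z hz.
  destruct (Req_dec z (2 * z0)) as [e|ne].
  { subst. replace (ff a m t chi E (2*z0)) with 0 by (unfold ff, amp; rewrite h2; unfold Rdiv; ring). rewrite Rabs_R0.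
    apply Rmult_le_pos; [|apply Rlt_le, Rinv_0_lt_compat; lra]. apply Rmult_le_pos; lra. }
  eapply Rle_trans. apply ff_le_amp.
  assert (hl : ln z <= -3) by (apply ln_le_m3; lra).
  eapply Rle_trans. apply amp_bound; try lra. apply hM; lra. apply hE; lra.
  destruct (v_le1 z hl) as [v1 v2].
  set (v := / - ln z) in *.
  assert (v^2 <= 1) by nra.
  unfold Rdiv. apply Rmult_le_compat_r. apply Rlt_le, Rinv_0_lt_compat; lra.
  assert (0 <= K * v^2) by (apply Rmult_le_pos; nra).
  assert (K * v^2 <= K) by nra.
  assert (z * M0 <= M0) by nra. 
  assert (0 <= z * M0) by nra. nra.
Qed.

Lemma vu_ge1 z : 0 < z -> ln z <= -3 -> 1 <= / (- ln z) * / z.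
Proof.
  intros hz hl. pose proof (Lz_lt z hz).
  replace (/ - ln z * / z) with ((/ z) / (- ln z)) by (field; lra).
  apply Rmult_le_reg_r with (- ln z). lra. field_simplify; lra.
Qed.

Lemma Bd_d_bound a m t (chi D1 E E1 : R -> R) d K M0 M1 :
  0 < m -> 0 < t -> 0 < d < 1 -> ln d <= -3 -> 0 <= K ->
  Rabs (chi d) <= M0 -> Rabs (D1 d) <= M1 ->
  Rabs (E d) <= K * (/ (- ln d))^2 -> Rabs (E1 d) <= 2 * K * (/ (- ln d))^3 * / d ->
  Rabs (Bd a m t chi D1 E E1 d) <= / t * (M0 * (K * (/ (- ln d))^2)) +
     / t^2 * ((M1 + 2 * M0) * K * sqrt (1 + m^2) * ((/ (- ln d))^3 * (/ d)^2)).
Proof.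
  intros hm ht hd hl hK c0 c1 b0 b1.
  pose proof (Bd_abs a m t chi D1 E E1 d ht) as h1.
  pose proof (HH_bound m chi D1 E E1 d K hm ltac:(lra) b0 b1) as h2.
  pose proof (vu_ge1 d ltac:(lra) hl) as hvu.
  destruct (v_le1 d hl) as [v1 v2].
  assert (hu : 0 < / d) by (apply Rinv_0_lt_compat; lra).
  assert (hPh : 0 <= sqrt (1 + m^2)) by apply sqrt_pos.
  set (v := / - ln d) in *. set (u := / d) in *. set (Ph := sqrt (1+m^2)) in *.
  assert (0 < / t) by (apply Rinv_0_lt_compat; lra).
  assert (0 < / t^2) by (apply Rinv_0_lt_compat; apply pow_lt; lra).
  pose proof (Rabs_pos (chi d)). pose proof (Rabs_pos (D1 d)). pose proof (Rabs_pos (E d)).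
  assert (e1 : Rabs (chi d) * Rabs (E d) <= M0 * (K * v^2)) by (apply Rmult_le_compat; auto).
  assert (k1 : v^2 <= v^3 * u). { replace (v^3*u) with (v^2 * (v*u)) by ring. assert (0 <= v^2) by nra. nra. }
  assert (e2 : (Rabs (D1 d) * (K * v ^ 2) + Rabs (chi d) * (2 * K * v ^ 3 * u)) <= (M1 + 2*M0) * K * (v^3 * u)).
  { assert (0 <= K * v^2) by nra. assert (K * v^2 <= K * (v^3*u)) by nra.
    assert (0 <= 2 * K * v^3 * u) by (assert (0 <= v^3) by (apply pow_le; lra); repeat apply Rmult_le_pos; lra).
    assert (Rabs (D1 d) * (K * v^2) <= M1 * (K * (v^3*u))) by (apply Rmult_le_compat; lra).
    assert (Rabs (chi d) * (2 * K * v ^ 3 * u) <= M0 * (2 * K * v ^ 3 * u)) by (apply Rmult_le_compat_r; lra).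
    nra. }
  assert (e3 : Rabs (HH m chi D1 E E1 d) <= (M1 + 2 * M0) * K * Ph * (v ^ 3 * u ^ 2)).
  { eapply Rle_trans. apply h2. replace ((M1 + 2 * M0) * K * Ph * (v ^ 3 * u ^ 2)) with (((M1 + 2*M0) * K * (v^3 * u)) * Ph * u) by ring.
    apply Rmult_le_compat_r; try lra. apply Rmult_le_compat_r; try lra. }
  eapply Rle_trans. apply h1. apply Rplus_le_compat; apply Rmult_le_compat_l; lra.
Qed.

Lemma Bd_small a m t (chi D1 E E1 : R -> R) d z K :
  0 < m -> 0 < t -> 0 < d <= z -> z < 1 -> ln z <= -3 -> 0 <= K ->
  Rabs (E z) <= K * (/ (- ln z))^2 -> Rabs (E1 z) <= 2 * K * (/ (- ln z))^3 * / z ->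
  Rabs (Bd a m t chi D1 E E1 z) <= (Rabs (chi z) + Rabs (D1 z)) *
     (/ t * K + / t^2 * ((K + 2 * K * / d) * sqrt (1 + m^2) * / d)).
Proof.
  intros hm ht hd hz1 hl hK b0 b1.
  pose proof (Bd_abs a m t chi D1 E E1 z ht) as h1.
  pose proof (HH_bound m chi D1 E E1 z K hm ltac:(lra) b0 b1) as h2.
  destruct (v_le1 z hl) as [v1 v2].
  assert (hu : 0 < / z) by (apply Rinv_0_lt_compat; lra).
  assert (hud : / z <= / d) by (apply Rinv_le_contravar; lra).
  assert (hPh : 0 <= sqrt (1 + m^2)) by apply sqrt_pos.
  set (v := / - ln z) in *. set (u := / z) in *. set (Ph := sqrt (1+m^2)) in *. set (ud := / d) in *.
  assert (0 < / t) by (apply Rinv_0_lt_compat; lra).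
  assert (0 < / t^2) by (apply Rinv_0_lt_compat; apply pow_lt; lra).
  pose proof (Rabs_pos (chi z)) as p0. pose proof (Rabs_pos (D1 z)) as p1. pose proof (Rabs_pos (E z)).
  set (x0 := Rabs (chi z)) in *. set (x1 := Rabs (D1 z)) in *.
  assert (kv2 : K * v^2 <= K) by (assert (v^2 <= 1) by nra; nra).
  assert (kv3 : 2 * K * v^3 * u <= 2 * K * ud).
  { assert (v^3 <= 1) by (assert (v^2 <= 1) by nra; nra). 
    assert (0 <= v^3) by (apply pow_le; lra).
    assert (v^3 * u <= ud) by nra. nra. }
  assert (e1 : x0 * Rabs (E z) <= x0 * K) by (apply Rmult_le_compat_l; lra).
  assert (e2 : (x1 * (K * v ^ 2) + x0 * (2 * K * v ^ 3 * u)) * Ph * u <= (x0 + x1) * ((K + 2 * K * ud) * Ph * ud)).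
  { assert (x1 * (K * v ^ 2) + x0 * (2 * K * v ^ 3 * u) <= (x0 + x1) * (K + 2 * K * ud)).
    { assert (x1 * (K * v ^ 2) <= x1 * K) by (apply Rmult_le_compat_l; lra).
      assert (x0 * (2 * K * v ^ 3 * u) <= x0 * (2*K*ud)) by (apply Rmult_le_compat_l; lra).
      assert (0 <= x0 * K) by nra. assert (0 <= x1 * (2*K*ud)) by (apply Rmult_le_pos; [lra| apply Rmult_le_pos; lra]). nra. }
    assert (0 <= x1 * (K * v ^ 2) + x0 * (2 * K * v ^ 3 * u)).
    { assert (0 <= v^3) by (apply pow_le; lra). assert (0 <= K * v^2) by nra. assert (0 <= 2 * K * v ^ 3 * u) by (repeat apply Rmult_le_pos; lra). nra. }

    replace ((x0 + x1) * ((K + 2 * K * ud) * Ph * ud)) with (((x0 + x1) * (K + 2 * K * ud)) * Ph * ud) by ring.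
    apply Rmult_le_compat; try nra. all: try (apply Rmult_le_compat_r; lra). }
  eapply Rle_trans. apply h1.
  assert (/ t * (x0 * Rabs (E z)) <= / t * (x0 * K)) by (apply Rmult_le_compat_l; lra).
  assert (/ t^2 * Rabs (HH m chi D1 E E1 z) <= / t^2 * ((x0 + x1) * ((K + 2 * K * ud) * Ph * ud))).
  { apply Rmult_le_compat_l; lra. }
  assert (/ t * (x0 * K) <= / t * ((x0 + x1) * K)) by (apply Rmult_le_compat_l; nra).
  replace ((x0 + x1) * (/ t * K + / t ^ 2 * ((K + 2 * K * ud) * Ph * ud))) with
     (/ t * ((x0 + x1) * K) + / t ^ 2 * ((x0 + x1) * ((K + 2 * K * ud) * Ph * ud))) by ring.
  lra.
Qed.

Lemma mid_piece a m t z0 K M0 M1 M2 (chi D1 D2 E E1 E2 : R -> R) d b :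
  0 < m -> 0 < t -> 0 < z0 -> 2 * z0 <= / 27 -> 0 <= K -> 0 < d < b -> b < 2 * z0 ->
  (forall z, 0 < z < 2 * z0 -> is_derive E z (E1 z) /\ is_derive E1 z (E2 z)) ->
  (forall z, 0 < z < 2 * z0 -> Rabs (E z) <= K * (/ (- ln z))^2 /\
       Rabs (E1 z) <= 2 * K * (/ (- ln z))^3 * / z /\ Rabs (E2 z) <= 4 * K * (/ (- ln z))^3 * (/ z)^2) ->
  (forall z, 0 <= z <= 2 * z0 -> Rabs (chi z) <= M0 /\ Rabs (D1 z) <= M1 /\ Rabs (D2 z) <= M2) ->
  (forall x, is_derive chi x (D1 x)) -> (forall x, is_derive D1 x (D2 x)) ->
  Rabs (RInt (ff a m t chi E) d b - Bd a m t chi D1 E E1 b + Bd a m t chi D1 E E1 d) <=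
   / t^2 * (K * sqrt (1 + m^2) * (M2 + 4*M1 + 4*M0) + K * m * (M1 + 2*M0)) * ((/ (- ln d))^3 * (/ d)^2).
Proof.
  intros hm ht hz0 hz1 hK hdb hb hE hB hM hc hc1.
  set (A := (K * sqrt (1 + m^2) * (M2 + 4*M1 + 4*M0) + K * m * (M1 + 2*M0))).
  assert (hM0 : 0 <= M0) by (pose proof (proj1 (hM 0 ltac:(lra))); pose proof (Rabs_pos (chi 0)); lra).
  assert (hM1 : 0 <= M1) by (pose proof (proj1 (proj2 (hM 0 ltac:(lra)))); pose proof (Rabs_pos (D1 0)); lra).
  assert (hM2 : 0 <= M2) by (pose proof (proj2 (proj2 (hM 0 ltac:(lra)))); pose proof (Rabs_pos (D2 0)); lra).
  assert (hA : 0 <= A).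
  { unfold A. assert (0 <= sqrt (1+m^2)) by apply sqrt_pos.
    apply Rplus_le_le_0_compat; repeat apply Rmult_le_pos; lra. }
  assert (ht2 : 0 < / t^2) by (apply Rinv_0_lt_compat; apply pow_lt; lra).
  set (f := ff a m t chi E).
  assert (hcont : forall y, 0 < y < 2 * z0 -> continuous f y).
  { intros y hy. unfold f, ff. apply ff_cont; auto. exists (D1 y); auto. exists (E1 y). apply hE; auto. }
  assert (hmvt := mvt_cmp (fun y => RInt f d y - Bd a m t chi D1 E E1 y)
     (fun y => - (/ t^2 * cos (t * sqrt (y^2+m^2) + a) * Hd m chi D1 D2 E E1 E2 y))
     (fun y => / t^2 * A * Q y) (fun y => / t^2 * A * ((2 - 3 / (- ln y)) / (y^3 * (- ln y)^3))) d b
     ltac:(lra)).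
  cbv beta in hmvt.
  rewrite RInt_point in hmvt. change (zero : R) with 0 in hmvt.
  assert (hQb : Q b <= 0) by (apply Q_nonpos; [lra| apply ln_le_m3; lra]).
  assert (hQd : - Q d = (/ - ln d)^3 * (/ d)^2) by (apply Q_val; [lra| apply ln_le_m3; lra]).
  assert (e : / t ^ 2 * A * Q b - / t ^ 2 * A * Q d <= / t^2 * A * ((/ - ln d)^3 * (/ d)^2)).
  { rewrite <- hQd. assert (0 <= / t^2 * A) by (apply Rmult_le_pos; lra).
    replace (/ t ^ 2 * A * Q b - / t ^ 2 * A * Q d) with (/ t^2 * A * (Q b + - Q d)) by ring.
    apply Rmult_le_compat_l; lra. }
  replace (RInt f d b - Bd a m t chi D1 E E1 b + Bd a m t chi D1 E E1 d) with
     (RInt f d b - Bd a m t chi D1 E E1 b - (0 - Bd a m t chi D1 E E1 d)) by ring.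
  eapply Rle_trans; [apply hmvt | exact e].
  - intros c hc0.
    assert (hcin : 0 < c < 2 * z0) by lra.
    destruct (hE c hcin) as [he1 he2].
    replace (- (/ t ^ 2 * cos (t * sqrt (c ^ 2 + m ^ 2) + a) * Hd m chi D1 D2 E E1 E2 c)) with
      (f c - (ff a m t chi E c + / t ^ 2 * cos (t * sqrt (c ^ 2 + m ^ 2) + a) * Hd m chi D1 D2 E E1 E2 c))
      by (unfold f; ring).
    assert (h1 : derivable_pt_lim (fun y => RInt f d y) c (f c)).
    { apply is_derive_Reals. apply Psi_deriv with 0 (2 * z0); auto; lra. }
    assert (h2 : derivable_pt_lim (Bd a m t chi D1 E E1) c (ff a m t chi E c + / t ^ 2 * cos (t * sqrt (c ^ 2 + m ^ 2) + a) * Hd m chi D1 D2 E E1 E2 c)).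
    { apply is_derive_Reals. apply Bd_deriv; auto; lra. }
    exact (derivable_pt_lim_minus _ _ c _ _ h1 h2).
  - intros c hc0.
    apply (derivable_pt_lim_scal Q (/ t^2 * A)). apply Q_deriv; [lra| apply ln_le_m3; lra].
  - intros c hc0.
    assert (hcin : 0 < c < 2 * z0) by lra.
    assert (hl : ln c <= -3) by (apply ln_le_m3; lra).
    destruct (hB c hcin) as [b0 [b1 b2]]. destruct (hM c ltac:(lra)) as [c0 [c1 c2]].
    pose proof (Hd_bound m chi D1 D2 E E1 E2 K M0 M1 M2 c hm ltac:(lra) hl hK c0 c1 c2 b0 b1 b2) as hH.
    fold A in hH. pose proof (Q_deriv_ge c ltac:(lra) hl) as hq.
    rewrite Rabs_Ropp, !Rabs_mult. rewrite (Rabs_right (/ t^2)) by lra.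
    pose proof (COS_bound (t * sqrt (c ^ 2 + m ^ 2) + a)).
    assert (Rabs (cos (t * sqrt (c ^ 2 + m ^ 2) + a)) <= 1) by (apply Rabs_le; lra).
    pose proof (Rabs_pos (cos (t * sqrt (c ^ 2 + m ^ 2) + a))).
    pose proof (Rabs_pos (Hd m chi D1 D2 E E1 E2 c)).
    rewrite Rmult_assoc, Rmult_assoc. apply Rmult_le_compat_l; [lra|].
    apply Rle_trans with (A * ((/ - ln c) ^ 3 * (/ c) ^ 3)).
    + nra.
    + apply Rmult_le_compat_l; auto.
Qed.

Lemma cont_of_derive (f f' : R -> R) x : is_derive f x (f' x) -> continuity_pt f x.
Proof.
  intros h. apply derivable_continuous_pt. exists (f' x). apply is_derive_Reals. exact h.
Qed.

Lemma core a m t z0 K M0 M1 M2 (chi D1 D2 E E1 E2 : R -> R) d :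
  0 < m -> 0 < t -> 0 < z0 -> 2 * z0 <= / 27 -> 0 <= K -> 0 < d < 2 * z0 ->
  (forall z, 0 < z < 2 * z0 -> is_derive E z (E1 z) /\ is_derive E1 z (E2 z)) ->
  (forall z, 0 < z < 2 * z0 -> Rabs (E z) <= K * (/ (- ln z))^2 /\
       Rabs (E1 z) <= 2 * K * (/ (- ln z))^3 * / z /\ Rabs (E2 z) <= 4 * K * (/ (- ln z))^3 * (/ z)^2) ->
  (forall z, 0 <= z <= 2 * z0 -> Rabs (chi z) <= M0 /\ Rabs (D1 z) <= M1 /\ Rabs (D2 z) <= M2) ->
  (forall x, is_derive chi x (D1 x)) -> (forall x, is_derive D1 x (D2 x)) ->
  chi (2 * z0) = 0 -> D1 (2 * z0) = 0 ->
  ex_RInt (ff a m t chi E) 0 (2 * z0) ->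
  Rabs (RInt (ff a m t chi E) 0 (2 * z0)) <=
    (d - 0) * (d * M0 * (K * (/ (- ln d))^2) / m) +
    (/ t * (M0 * (K * (/ (- ln d))^2)) + / t^2 * ((M1 + 2 * M0) * K * sqrt (1 + m^2) * ((/ (- ln d))^3 * (/ d)^2))) +
    / t^2 * (K * sqrt (1 + m^2) * (M2 + 4*M1 + 4*M0) + K * m * (M1 + 2*M0)) * ((/ (- ln d))^3 * (/ d)^2).
Proof.
  intros hm ht hz0 hz1 hK hd hE hB hM hc hc1 h20 h21 hI.
  assert (hM0 : 0 <= M0) by (pose proof (proj1 (hM 0 ltac:(lra))); pose proof (Rabs_pos (chi 0)); lra).
  assert (hPh : 0 <= sqrt (1 + m^2)) by apply sqrt_pos.
  assert (ht1 : 0 < / t) by (apply Rinv_0_lt_compat; lra).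
  assert (ht2 : 0 < / t^2) by (apply Rinv_0_lt_compat; apply pow_lt; lra).
  assert (hd1 : 0 < / d) by (apply Rinv_0_lt_compat; lra).
  set (f := ff a m t chi E).
  apply Rle_plus_epsilon. intros eps he.
  set (Kc := / t * K + / t^2 * ((K + 2 * K * / d) * sqrt (1 + m^2) * / d)).
  assert (hKc : 0 <= Kc).
  { unfold Kc. apply Rplus_le_le_0_compat; apply Rmult_le_pos; try lra.
    repeat apply Rmult_le_pos; try lra. apply Rplus_le_le_0_compat; try lra. repeat apply Rmult_le_pos; lra. }
  set (eta := eps / (4 * (Kc + 1))).
  assert (heta : 0 < eta) by (unfold eta; apply Rdiv_lt_0_compat; lra).
  destruct (cont_small chi (2*z0) (cont_of_derive chi D1 _ (hc _)) h20 eta heta) as [d1 [hd1p hd1b]].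
  destruct (cont_small D1 (2*z0) (cont_of_derive D1 D2 _ (hc1 _)) h21 eta heta) as [d2 [hd2p hd2b]].
  set (Mt := M0 * K / m).
  assert (hMt : 0 <= Mt) by (unfold Mt; apply Rmult_le_pos; [apply Rmult_le_pos; lra| apply Rlt_le, Rinv_0_lt_compat; lra]).
  set (r := Rmin (Rmin d1 d2) (eps / (8 * (Mt + 1)))).
  assert (hr : 0 < r) by (unfold r; repeat apply Rmin_pos; try lra; apply Rdiv_lt_0_compat; lra).
  assert (hr1 : r <= d1) by (unfold r; eapply Rle_trans; [apply Rmin_l| apply Rmin_l]).
  assert (hr2 : r <= d2) by (unfold r; eapply Rle_trans; [apply Rmin_l| apply Rmin_r]).
  assert (hr3 : r <= eps / (8 * (Mt + 1))) by (unfold r; apply Rmin_r).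
  set (b := Rmax ((d + 2 * z0) / 2) (2 * z0 - r / 2)).
  assert (hb1 : (d + 2 * z0) / 2 <= b) by apply Rmax_l.
  assert (hb2 : 2 * z0 - r / 2 <= b) by apply Rmax_r.
  assert (hb3 : b < 2 * z0) by (apply Rmax_lub_lt; lra).
  assert (hbd : d < b) by lra.
  assert (hI1 : ex_RInt f 0 d) by (apply (ex_RInt_Chasles_1 (V:=R_CompleteNormedModule) f 0 d (2 * z0)); [lra| exact hI]).
  assert (hI23 : ex_RInt f d (2 * z0)) by (apply (ex_RInt_Chasles_2 (V:=R_CompleteNormedModule) f 0 d (2*z0)); [lra| exact hI]).
  assert (hI2 : ex_RInt f d b) by (apply (ex_RInt_Chasles_1 (V:=R_CompleteNormedModule) f d b (2 * z0)); [lra| exact hI23]).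
  assert (hI3 : ex_RInt f b (2 * z0)) by (apply (ex_RInt_Chasles_2 (V:=R_CompleteNormedModule) f d b (2*z0)); [lra| exact hI23]).
  assert (eI : RInt f 0 (2 * z0) = RInt f 0 d + (RInt f d b + RInt f b (2 * z0))).
  { rewrite <- (RInt_Chasles f 0 d (2*z0)) by auto. rewrite <- (RInt_Chasles f d b (2*z0)) by auto. reflexivity. }
  pose proof (near_piece a m t z0 K M0 chi E d hm hz0 hz1 hK hd
    (fun z hz => proj1 (hB z hz)) (fun z hz => proj1 (hM z hz)) hI1) as p1.
  pose proof (tail_piece a m t z0 K M0 chi E b hm hz0 hz1 hK ltac:(lra)
    (fun z hz => proj1 (hB z hz)) (fun z hz => proj1 (hM z hz)) h20 hI3) as p3.
  pose proof (mid_piece a m t z0 K M0 M1 M2 chi D1 D2 E E1 E2 d b hm ht hz0 hz1 hK ltac:(lra) hb3 hE hB hM hc hc1) as p2.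
  assert (hld : ln d <= -3) by (apply ln_le_m3; lra).
  destruct (hB d hd) as [b0 [b1 _]]. destruct (hM d ltac:(lra)) as [c0 [c1 _]].
  pose proof (Bd_d_bound a m t chi D1 E E1 d K M0 M1 hm ht ltac:(lra) hld hK c0 c1 b0 b1) as pd.
  assert (hlb : ln b <= -3) by (apply ln_le_m3; lra).
  destruct (hB b ltac:(lra)) as [bb0 [bb1 _]].
  pose proof (Bd_small a m t chi D1 E E1 d b K hm ht ltac:(lra) ltac:(lra) hlb hK bb0 bb1) as pb.
  fold Kc in pb.
  assert (hcb : Rabs (chi b) < eta) by (apply hd1b; rewrite Rabs_left1; lra).
  assert (hDb : Rabs (D1 b) < eta) by (apply hd2b; rewrite Rabs_left1; lra).
  assert (pb' : Rabs (Bd a m t chi D1 E E1 b) <= eps / 2).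
  { eapply Rle_trans. exact pb.
    apply Rle_trans with ((2 * eta) * Kc). apply Rmult_le_compat_r; lra.
    unfold eta. apply Rmult_le_reg_r with (4 * (Kc + 1)). lra. field_simplify; nra. }
  assert (p3' : (2 * z0 - b) * Mt <= eps / 4).
  { apply Rle_trans with ((eps / (8 * (Mt + 1))) * Mt). apply Rmult_le_compat_r; lra.
    apply Rmult_le_reg_r with (8 * (Mt + 1)). lra. field_simplify; nra. }
  fold Mt in p3.
  rewrite eI. fold f in p1, p2, p3.
  set (I1 := RInt f 0 d) in *. set (I2 := RInt f d b) in *. set (I3 := RInt f b (2 * z0)) in *.
  set (Bb := Bd a m t chi D1 E E1 b) in *. set (Bdd := Bd a m t chi D1 E E1 d) in *.
  replace (I1 + (I2 + I3)) with (I1 + ((I2 - Bb + Bdd) + Bb - Bdd) + I3) by ring.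
  eapply Rle_trans. apply Rabs_triang.
  eapply Rle_trans. apply Rplus_le_compat_r. apply Rabs_triang.
  eapply Rle_trans. apply Rplus_le_compat_r. apply Rplus_le_compat_l. apply Rabs_triang.
  eapply Rle_trans. apply Rplus_le_compat_r. apply Rplus_le_compat_l. apply Rplus_le_compat_r. apply Rabs_triang.
  rewrite Rabs_Ropp.
  lra.
Qed.

Lemma total_piece a m t z0 K M0 (chi E : R -> R) :
  0 < m -> 0 < z0 -> 2 * z0 <= / 27 -> 0 <= K ->
  (forall z, 0 < z < 2 * z0 -> Rabs (E z) <= K * (/ (- ln z))^2) ->
  (forall z, 0 <= z <= 2 * z0 -> Rabs (chi z) <= M0) -> chi (2 * z0) = 0 ->
  ex_RInt (ff a m t chi E) 0 (2 * z0) ->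
  Rabs (RInt (ff a m t chi E) 0 (2 * z0)) <= (2 * z0 - 0) * (M0 * K / m).
Proof.
  intros hm hz0 hz1 hK hE hM h2 hI.
  assert (hM0 : 0 <= M0) by (pose proof (hM 0 ltac:(lra)); pose proof (Rabs_pos (chi 0)); lra).
  assert (0 <= M0 * K / m) by (apply Rmult_le_pos; [apply Rmult_le_pos; lra| apply Rlt_le, Rinv_0_lt_compat; lra]).
  apply abs_RInt_le_const; [lra|auto|]. intros z hz.
  destruct (Req_dec z 0) as [e0|n0].
  { subst. unfold ff. rewrite amp0, Rmult_0_r, Rabs_R0. lra. }
  destruct (Req_dec z (2 * z0)) as [e|ne].
  { subst. replace (ff a m t chi E (2*z0)) with 0 by (unfold ff, amp; rewrite h2; unfold Rdiv; ring). rewrite Rabs_R0. lra. }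
  eapply Rle_trans. apply ff_le_amp.
  assert (hl : ln z <= -3) by (apply ln_le_m3; lra).
  eapply Rle_trans. apply amp_bound; try lra. apply hM; lra. apply hE; lra.
  destruct (v_le1 z hl) as [v1 v2].
  set (v := / - ln z) in *.
  assert (v^2 <= 1) by nra.
  unfold Rdiv. apply Rmult_le_compat_r. apply Rlt_le, Rinv_0_lt_compat; lra.
  assert (0 <= K * v^2) by (apply Rmult_le_pos; nra).
  assert (K * v^2 <= K) by nra.
  assert (z * M0 <= M0) by nra.
  assert (0 <= z * M0) by nra. nra.
Qed.

Lemma per_alpha a m t z0 K M0 M1 M2 (chi D1 D2 E E1 E2 : R -> R) :
  0 < m -> 2 < t -> 0 < z0 -> 2 * z0 <= / 27 -> 0 <= K ->
  (forall z, 0 < z < 2 * z0 -> is_derive E z (E1 z) /\ is_derive E1 z (E2 z)) ->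
  (forall z, 0 < z < 2 * z0 -> Rabs (E z) <= K * (/ (- ln z))^2 /\
       Rabs (E1 z) <= 2 * K * (/ (- ln z))^3 * / z /\ Rabs (E2 z) <= 4 * K * (/ (- ln z))^3 * (/ z)^2) ->
  (forall z, 0 <= z <= 2 * z0 -> Rabs (chi z) <= M0 /\ Rabs (D1 z) <= M1 /\ Rabs (D2 z) <= M2) ->
  (forall x, is_derive chi x (D1 x)) -> (forall x, is_derive D1 x (D2 x)) ->
  chi (2 * z0) = 0 -> D1 (2 * z0) = 0 ->
  ex_RInt (ff a m t chi E) 0 (2 * z0) ->
  Rabs (RInt (ff a m t chi E) 0 (2 * z0)) <=
   (4 * (M0 * K / m + M0 * K + (M1 + 2 * M0) * K * sqrt (1 + m^2) +
        (K * sqrt (1 + m^2) * (M2 + 4*M1 + 4*M0) + K * m * (M1 + 2*M0)))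
    + 2 * z0 * (M0 * K / m) * 4 * (/ z0)^4) / (t * (ln t)^2).
Proof.
  intros hm ht hz0 hz1 hK hE hB hM hc hc1 h20 h21 hI.
  assert (hM0 : 0 <= M0) by (pose proof (proj1 (hM 0 ltac:(lra))); pose proof (Rabs_pos (chi 0)); lra).
  assert (hM1 : 0 <= M1) by (pose proof (proj1 (proj2 (hM 0 ltac:(lra)))); pose proof (Rabs_pos (D1 0)); lra).
  assert (hM2 : 0 <= M2) by (pose proof (proj2 (proj2 (hM 0 ltac:(lra)))); pose proof (Rabs_pos (D2 0)); lra).
  assert (hPh : 0 <= sqrt (1 + m^2)) by apply sqrt_pos.
  set (Ph := sqrt (1 + m^2)) in *.
  set (Mt := M0 * K / m).
  assert (hMt : 0 <= Mt) by (unfold Mt; apply Rmult_le_pos; [apply Rmult_le_pos; lra| apply Rlt_le, Rinv_0_lt_compat; lra]).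
  set (A := K * Ph * (M2 + 4*M1 + 4*M0) + K * m * (M1 + 2*M0)).
  assert (hA : 0 <= A) by (unfold A; apply Rplus_le_le_0_compat; repeat apply Rmult_le_pos; lra).
  set (W := Mt + M0 * K + (M1 + 2 * M0) * K * Ph + A).
  assert (hW1 : 0 <= M0 * K) by nra. assert (hW2 : 0 <= (M1 + 2 * M0) * K * Ph) by (repeat apply Rmult_le_pos; lra).
  assert (hW : 0 <= W) by (unfold W; lra).
  set (s := sqrt t).
  assert (hs : 0 < s) by (apply sqrt_lt_R0; lra).
  assert (hss : s * s = t) by (apply sqrt_sqrt; lra).
  assert (hs1 : 1 < s). { destruct (Rle_lt_dec s 1); auto. nra. }
  set (L := ln s).
  assert (hL0 : 0 < L) by (unfold L; rewrite <- ln_1; apply ln_increasing; lra).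
  assert (hlt : ln t = 2 * L) by (rewrite <- hss; unfold L; rewrite ln_mult by lra; ring).
  assert (hLs : L < s). { pose proof (Lz_lt (/ s) ltac:(apply Rinv_0_lt_compat; lra)).
     rewrite ln_Rinv, Rinv_inv in H by lra. fold L in H. lra. }
  rewrite hlt. replace (t * (2*L)^2) with (s*s*(2*L)^2) by (rewrite hss; ring).
  assert (hden : 0 < s * s * (2 * L)^2) by (apply Rmult_lt_0_compat; nra).
  destruct (Rle_lt_dec (/ z0) s) as [big|small].
  -
    set (d := / s).
    assert (hd0 : 0 < d) by (unfold d; apply Rinv_0_lt_compat; lra).
    assert (hdz : d <= z0). { unfold d. rewrite <- (Rinv_inv z0). apply Rinv_le_contravar; auto. apply Rinv_0_lt_compat; lra. }
    assert (hld : ln d = - L) by (unfold d, L; apply ln_Rinv; lra).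
    assert (hL3 : 3 <= L) by (pose proof (ln_le_m3 d hd0 ltac:(lra)); lra).
    pose proof (core a m t z0 K M0 M1 M2 chi D1 D2 E E1 E2 d hm ltac:(lra) hz0 hz1 hK ltac:(lra)
       hE hB hM hc hc1 h20 h21 hI) as hc0.
    eapply Rle_trans. exact hc0.
    rewrite hld, Ropp_involutive. fold Ph. fold A. rewrite <- hss. unfold d. rewrite Rinv_inv.
    replace ((/ s - 0) * (/ s * M0 * (K * (/ L) ^ 2) / m) +
       (/ (s * s) * (M0 * (K * (/ L) ^ 2)) + / (s * s) ^ 2 * ((M1 + 2 * M0) * K * Ph * ((/ L) ^ 3 * s ^ 2))) +
       / (s * s) ^ 2 * A * ((/ L) ^ 3 * s ^ 2))
     with ((Mt + M0 * K + ((M1 + 2 * M0) * K * Ph) * / L + A * / L) / (s * s * L^2))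
     by (unfold Mt; field; lra).
    assert (hiL : / L <= 1) by (rewrite <- Rinv_1; apply Rinv_le_contravar; lra).
    assert (hiL0 : 0 < / L) by (apply Rinv_0_lt_compat; lra).
    assert (e1 : (M1 + 2 * M0) * K * Ph * / L <= (M1 + 2 * M0) * K * Ph) by nra.
    assert (e2 : A * / L <= A) by nra.
    assert (hq : 0 < s * s * L^2) by (apply Rmult_lt_0_compat; nra).
    apply Rle_trans with (W / (s * s * L^2)).
    + unfold Rdiv. apply Rmult_le_compat_r. apply Rlt_le, Rinv_0_lt_compat; lra. unfold W. lra.
    + assert (0 <= 2 * z0 * Mt * 4 * (/ z0) ^ 4).
      { assert (0 < / z0) by (apply Rinv_0_lt_compat; lra). apply Rmult_le_pos; [| apply pow_le; lra]. assert (0 <= z0 * Mt) by nra. lra. }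
      replace (W / (s * s * L ^ 2)) with (4 * W / (s * s * (2 * L) ^ 2)) by (field; lra).
      unfold Rdiv. apply Rmult_le_compat_r. apply Rlt_le, Rinv_0_lt_compat; lra. fold Mt. unfold W. lra.
  -
    pose proof (total_piece a m t z0 K M0 chi E hm hz0 hz1 hK (fun z hz => proj1 (hB z hz))
       (fun z hz => proj1 (hM z hz)) h20 hI) as hT. fold Mt in hT.
    eapply Rle_trans. exact hT.
    assert (hiz : 0 < / z0) by (apply Rinv_0_lt_compat; lra).
    assert (hsz : s * s * (2 * L)^2 <= 4 * (/ z0)^4).
    { assert (L * L <= s * s) by nra. assert (s * s <= / z0 * / z0) by nra.
      replace (s * s * (2 * L)^2) with (4 * ((s * s) * (L * L))) by ring.
      replace (4 * (/ z0)^4) with (4 * ((/ z0 * / z0) * (/ z0 * / z0))) by ring.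
      apply Rmult_le_compat_l; try lra. apply Rmult_le_compat; nra. }
    apply Rmult_le_reg_r with (s * s * (2 * L)^2); auto.
    match goal with |- _ <= ?a / ?b * ?b => replace (a / b * b) with a by (field; lra) end.
    assert (4 * W >= 0) by lra.
    assert (0 <= (2 * z0 - 0) * Mt) by nra.
    apply Rle_trans with ((2 * z0 - 0) * Mt * (4 * (/ z0)^4)).
    + apply Rmult_le_compat_l; lra.
    + replace (2 * z0 * Mt * 4 * (/ z0) ^ 4) with ((2 * z0 - 0) * Mt * (4 * (/ z0)^4)) by ring. lra.
Qed.

Lemma zero_edge (f : R -> R) a : continuity_pt f a -> (forall z, a < z -> f z = 0) -> f a = 0.
Proof.
  intros hc hz. destruct (Req_dec (f a) 0) as [e|ne]; auto. exfalso.
  assert (he : 0 < Rabs (f a)) by (apply Rabs_pos_lt; auto).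
  destruct (hc _ he) as [al [hal H]].
  specialize (H (a + al / 2)). simpl in H. unfold Rdist in H.
  rewrite hz in H by lra. rewrite Rminus_0_l, Rabs_Ropp in H.
  assert (Rabs (f a) < Rabs (f a)); [|lra]. apply H. split.
  - unfold D_x, no_cond. split; auto. lra.
  - replace (a + al / 2 - a) with (al / 2) by ring. rewrite Rabs_right; lra.
Qed.

Lemma deriv_zero (f : R -> R) a z l : is_derive f z l -> (forall y, a < y -> f y = 0) -> a < z -> l = 0.
Proof.
  intros hd hz haz.
  assert (h : is_derive (fun _ : R => 0) z l).
  { apply is_derive_ext_loc with f; auto. apply locally_interval with a p_infty; simpl; try lra; auto. }
  pose proof (is_derive_unique _ _ _ h). pose proof (is_derive_unique _ _ _ (is_derive_const (V:=R_NormedModule) 0 z)).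
  simpl in H, H0. rewrite <- H. exact H0.
Qed.

Lemma sqrt_sum_le x y : sqrt (x^2 + y^2) <= Rabs x + Rabs y.
Proof.
  rewrite <- (sqrt_square (Rabs x + Rabs y)) by (pose proof (Rabs_pos x); pose proof (Rabs_pos y); lra).
  apply sqrt_le_1_alt. pose proof (Rabs_pos x); pose proof (Rabs_pos y).
  replace (x^2) with (Rabs x * Rabs x) by (rewrite <- Rabs_mult, Rabs_right; [ring| nra]).
  replace (y^2) with (Rabs y * Rabs y) by (rewrite <- Rabs_mult, Rabs_right; [ring| nra]). nra.
Qed.

Theorem corollary4p3 :
  exists z1 : R, 0 < z1 /\
  forall (z0 m : R) (chi E E1 E2 : R -> R) (K : R),
    0 < z0 -> z0 < z1 -> 0 < m ->
    smooth chi ->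
    (forall z, chi (- z) = chi z) ->
    (forall z, Rabs z < z0 -> chi z = 1) ->
    (forall z, Rabs z > 2 * z0 -> chi z = 0) ->
    (forall z, 0 < z < 2 * z0 ->
       derivable_pt_lim E z (E1 z) /\ derivable_pt_lim E1 z (E2 z)) ->
    (forall z, 0 < z < 2 * z0 ->
       Rabs (E z) <= K * Rabs (/ (ln z) ^ 2) /\
       Rabs (E1 z) <= K * Rabs (- 2 / ((ln z) ^ 3 * z)) /\
       Rabs (E2 z) <= K * Rabs (6 / ((ln z) ^ 4 * z ^ 2) + 2 / ((ln z) ^ 3 * z ^ 2))) ->
    exists C : R, forall t : R, t > 2 ->
      forall (pr_re : Riemann_integrable (re_integrand m t chi E) 0 (2 * z0))
             (pr_im : Riemann_integrable (im_integrand m t chi E) 0 (2 * z0)),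
        sqrt (RiemannInt pr_re ^ 2 + RiemannInt pr_im ^ 2)
          <= C / (t * (ln t) ^ 2).
Proof.
  exists (/ 60). split; [lra|].
  intros z0 m chi E E1 E2 K hz0 hz1 hm [D [hD0 hD]] _ _ h0 hder hbnd.
  assert (hz2 : 2 * z0 <= / 27) by lra.
  assert (hchi : D O = chi) by (apply functional_extensionality; auto).
  assert (hc : forall x, is_derive chi x (D 1%nat x)) by (intros x; rewrite <- hchi; apply is_derive_Reals, hD).
  assert (hc1 : forall x, is_derive (D 1%nat) x (D 2%nat x)) by (intros x; apply is_derive_Reals, hD).
  assert (hcont : forall k c, continuity_pt (fun z => Rabs (D k z)) c).
  { intros k c. apply (continuity_pt_comp (D k) Rabs). apply derivable_continuous_pt. exists (D (S k) c). apply hD.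
    apply Rcontinuity_abs. }
  destruct (continuity_ab_maj (fun z => Rabs (D O z)) 0 (2*z0) ltac:(lra) (fun c _ => hcont O c)) as [x0 [hx0 _]].
  destruct (continuity_ab_maj (fun z => Rabs (D 1%nat z)) 0 (2*z0) ltac:(lra) (fun c _ => hcont 1%nat c)) as [x1 [hx1 _]].
  destruct (continuity_ab_maj (fun z => Rabs (D 2%nat z)) 0 (2*z0) ltac:(lra) (fun c _ => hcont 2%nat c)) as [x2 [hx2 _]].
  set (M0 := Rabs (D O x0)) in *. set (M1 := Rabs (D 1%nat x1)) in *. set (M2 := Rabs (D 2%nat x2)) in *.
  rewrite hchi in hx0.
  assert (hM : forall z, 0 <= z <= 2 * z0 -> Rabs (chi z) <= M0 /\ Rabs (D 1%nat z) <= M1 /\ Rabs (D 2%nat z) <= M2).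
  { intros z hz. split; [|split]; [apply hx0 | apply hx1 | apply hx2]; auto. }
  assert (hzero : forall z, 2 * z0 < z -> chi z = 0) by (intros z hz; apply h0; rewrite Rabs_right; lra).
  assert (h20 : chi (2 * z0) = 0).
  { apply zero_edge; auto. apply (cont_of_derive chi (D 1%nat)); auto. }
  assert (h21 : D 1%nat (2 * z0) = 0).
  { apply zero_edge. apply (cont_of_derive (D 1%nat) (D 2%nat)); auto.
    intros z hz. apply (deriv_zero chi (2 * z0) z); auto. }
  assert (hK : 0 <= K).
  { destruct (hbnd z0 ltac:(lra)) as [b0 _].
    assert (hl : ln z0 < 0) by (rewrite <- ln_1; apply ln_increasing; lra).
    assert (0 < Rabs (/ ln z0 ^ 2)) by (apply Rabs_pos_lt; apply Rinv_neq_0_compat; apply pow_nonzero; lra).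
    pose proof (Rabs_pos (E z0)). destruct (Rle_lt_dec 0 K); auto. nra. }
  assert (hE : forall z, 0 < z < 2 * z0 -> is_derive E z (E1 z) /\ is_derive E1 z (E2 z)).
  { intros z hz. destruct (hder z hz). split; apply is_derive_Reals; auto. }
  assert (hB : forall z, 0 < z < 2 * z0 -> Rabs (E z) <= K * (/ (- ln z))^2 /\
       Rabs (E1 z) <= 2 * K * (/ (- ln z))^3 * / z /\ Rabs (E2 z) <= 4 * K * (/ (- ln z))^3 * (/ z)^2).
  { intros z hz. destruct (hbnd z hz) as [b0 [b1 b2]]. apply Ebounds; auto; try lra. apply ln_le_m3; lra. }
  eexists. intros t ht pr_re pr_im.
  pose proof (ex_RInt_Reals_1 _ _ _ pr_re) as ire. pose proof (ex_RInt_Reals_1 _ _ _ pr_im) as iim.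
  rewrite <- (RInt_Reals _ _ _ pr_re), <- (RInt_Reals _ _ _ pr_im).
  assert (ere : re_integrand m t chi E = ff 0 m t chi E).
  { apply functional_extensionality. intros z. unfold re_integrand, ff. rewrite Rplus_0_r. reflexivity. }
  assert (eim : im_integrand m t chi E = ff (PI / 2) m t chi E).
  { apply functional_extensionality. intros z. unfold im_integrand, ff. rewrite cos_plus, cos_PI2, sin_PI2. ring. }
  rewrite ere in ire |- *. rewrite eim in iim |- *.
  pose proof (per_alpha 0 m t z0 K M0 M1 M2 chi (D 1%nat) (D 2%nat) E E1 E2 hm ht hz0 hz2 hK hE hB hM hc hc1 h20 h21 ire) as r1.
  pose proof (per_alpha (PI/2) m t z0 K M0 M1 M2 chi (D 1%nat) (D 2%nat) E E1 E2 hm ht hz0 hz2 hK hE hB hM hc hc1 h20 h21 iim) as r2.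
  eapply Rle_trans. apply sqrt_sum_le.
  match type of r1 with _ <= ?c / ?q => 
    apply Rle_trans with (c / q + c / q); [lra| replace (c / q + c / q) with ((2 * c) / q) by (unfold Rdiv; ring)] end.
  apply Rle_refl.
Qed.
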